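(* For $n\ge2$ and $k_1,\dots,k_n\in\mathbb Z\setminus\{0\}$ with $k=\sum_{j=1}^nk_j\neq0$, let $H_n=k^3-\sum_{j=1}^nk_j^3$, $k_{\max}=\max_j|k_j|$, and let $k_{\max_j}$ be the $j$-th largest element of $\{|k_1|,\dots,|k_n|\}$. There is a constant $c>0$ depending only on $n$ such that: (1) If $n=2$: $|H_2|\ge c\,k_{\max}^2$. (2) If $n=3$: at least one of the following holds: (A) $|H_3|\ge c\,k_{\max}^2$; (B) $k_{j_0}=k$ for some $j_0\in\{1,2,3\}$; (C) $|k_j|\ge c|k|$ for all $j\in\{1,2,3\}$. (3) If $n\ge4$: at least one of the following holds: (A) $|H_n|\ge c\,k_{\max}^2$; (B) $k=k_{j_0}$ for some $j_0\in\{1,\dots,n\}$; (C) $k_{\max_3}\ge c|k|$; (D) $k_{\max_3}^2k_{\max_4}\ge c\,k_{\max}^2$. *)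

(* Defs.v *)
From HB Require Import structures.
From mathcomp Require Import all_boot all_order all_algebra.
From mathcomp Require Import reals.
Set Implicit Arguments. Unset Strict Implicit. Unset Printing Implicit Defensive.
Import Order.TTheory GRing.Theory Num.Theory.
Local Open Scope ring_scope.

Definition ksum (n : nat) (k : 'I_n -> int) : int := \sum_(j < n) k j.

Definition Hn (n : nat) (k : 'I_n -> int) : int :=
  ksum k ^+ 3 - \sum_(j < n) k j ^+ 3.

Definition kmax (n : nat) (k : 'I_n -> int) : nat := (\max_(j < n) absz (k j))%N.

(* k_{max_m} (1-indexed, m >= 1): the m-th largest entry of the list
   |k_1|, ..., |k_n|, counted with multiplicity (decreasing rearrangement). *)
Definition kmaxj (n : nat) (k : 'I_n -> int) (m : nat) : nat :=
  nth 0%N (sort geq [seq absz (k j) | j <- enum 'I_n]) m.-1.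

(* Main.v *)
Require Import Defs.
From HB Require Import structures.
From mathcomp Require Import all_boot all_order all_algebra.
From mathcomp Require Import reals ring lra zify.
Import Order.TTheory GRing.Theory Num.Theory.
Local Open Scope ring_scope.

Section Core.
Variable R : realFieldType.
Lemma tri3 (u v w : R) : `|u + v + w| <= `|u| + `|v| + `|w|.
Proof. by apply: (le_trans (ler_normD _ _)); rewrite lerD2r ler_normD. Qed.
Lemma pq_half (p q : R) : 1 <= p -> 1 <= q -> (p + q) / 2 <= p * q.
Proof. move=> *; nra. Qed.

Lemma errbound (N r t X m3 m4 T : R) : 1 <= N -> m3 = `|r| -> 1 <= m4 -> m4 <= m3 ->
  `|t| <= T -> T <= N * m4 -> `|X| <= T * m3 ^+ 2 ->
  `|3 * r ^+ 2 * t + 3 * r * t ^+ 2 + t ^+ 3 - X| <= 8 * N ^+ 3 * (m3 ^+ 2 * m4).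
Proof.
move=> N1 hm3 m41 m43 ht hT hX.
set W := m3 ^+ 2 * m4.
have m30 : 0 <= m3 by lra.
have hE : `|3 * r ^+ 2 * t + 3 * r * t ^+ 2 + t ^+ 3| <=
          3 * m3 ^+ 2 * `|t| + 3 * m3 * `|t| ^+ 2 + `|t| ^+ 3.
  apply: (le_trans (tri3 _ _ _)).
  rewrite !normrM hm3 (ger0_norm (_ : (0:R) <= 3)) //; lra.
have t0 : 0 <= `|t| by [].
have ht2 : `|t| <= N * m4 by lra.
have m40 : 0 <= m4 by lra.
have N0 : 0 <= N by lra.
have Nm40 : 0 <= N * m4 by apply: mulr_ge0.
have sq0 : 0 <= m3 ^+ 2 by apply: sqr_ge0.
have W0 : 0 <= W by apply: mulr_ge0.
have e1 : 3 * m3 ^+ 2 * `|t| <= 3 * N * W.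
  have : m3 ^+ 2 * `|t| <= m3 ^+ 2 * (N * m4) by apply: ler_wpM2l.
  rewrite /W; lra.
have tt : `|t| * `|t| <= (N * m4) * (N * m4) by apply: ler_pM.
have m44 : m4 * m4 <= m4 * m3 by apply: ler_wpM2l.
have m44' : m4 * m4 <= m3 * m3 by apply: ler_pM; lra.
have e2 : 3 * m3 * `|t| ^+ 2 <= 3 * N ^+ 2 * W.
  have g1 : m3 * (`|t| * `|t|) <= m3 * ((N * m4) * (N * m4)) by apply: ler_wpM2l.
  have g2 : (N * N) * (m3 * (m4 * m4)) <= (N * N) * (m3 * (m4 * m3)).
    apply: ler_wpM2l; first by apply: mulr_ge0.
    by apply: ler_wpM2l.
  rewrite /W; lra.
have e3 : `|t| ^+ 3 <= N ^+ 3 * W.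
  have g1 : `|t| * (`|t| * `|t|) <= (N * m4) * ((N * m4) * (N * m4)).
    by apply: ler_pM => //; apply: mulr_ge0.
  have g2 : (N * N * N) * (m4 * (m4 * m4)) <= (N * N * N) * (m4 * (m3 * m3)).
    apply: ler_wpM2l; first by rewrite !mulr_ge0.
    by apply: ler_wpM2l.
  rewrite /W; lra.
have e4 : `|X| <= N * W.
  have : T * m3 ^+ 2 <= (N * m4) * m3 ^+ 2 by apply: ler_wpM2r.
  rewrite /W; lra.
have NN1 : N <= N ^+ 2 by rewrite expr2; nra.
have NN2 : N ^+ 2 <= N ^+ 3.
  have : N ^+ 2 * 1 <= N ^+ 2 * N by apply: ler_wpM2l; [apply: sqr_ge0 | lra].
  by rewrite mulr1 -exprSr.
have NN : 3 * N + 3 * N ^+ 2 + N ^+ 3 + N <= 8 * N ^+ 3 by lra.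
suff hEtot : `|3 * r ^+ 2 * t + 3 * r * t ^+ 2 + t ^+ 3 - X| <= 8 * N ^+ 3 * W.
  by [].
  apply: (le_trans (ler_normB _ _)).
  have : (3 * N + 3 * N ^+ 2 + N ^+ 3 + N) * W <= 8 * N ^+ 3 * W by apply: ler_wpM2r.
  lra.
Qed.

Lemma base3 (x y z M c : R) : 0 < c -> c <= 1/12 ->
  `|x| <= M -> `|y| <= M -> `|z| <= M -> (M = `|x| \/ M = `|y| \/ M = `|z|) ->
  1 <= `|z| -> 1 <= `|x + y| -> 1 <= `|y + z| -> 1 <= `|z + x| ->
  `|z| < c * `|x + y + z| ->
  c * M ^+ 2 <= `|x + y| * `|y + z| * `|z + x|.
Proof.
move=> c0 c12 hx hy hz hM z1 p1 q1 r1 hsm.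
have hk := tri3 x y z.
have M1 : 1 <= M by lra.
have hck : c * `|x + y + z| <= c * (3 * M).
  by apply: ler_wpM2l; [lra | lra].
have hc3 : c * (3 * M) <= M / 4 by nra.
have hzM : `|z| <= M / 4 by lra.
have hM2 : 0 <= M ^+ 2 by rewrite sqr_ge0.
have cM2 : c * M ^+ 2 <= 9 / 32 * M ^+ 2 by nra.
case: hM => [hM|[hM|hM]]; last by lra.
- have h1 : `|x| - `|z| <= `|z + x| by rewrite (addrC z x); apply: lerB_normD.
  have h2 := tri3 (x + y) (- (y + z)) z.
  have e : x + y + - (y + z) + z = x by ring.
  rewrite e normrN in h2.
  have hpq := pq_half _ _ p1 q1.
  have : (3 * M / 8) * (3 * M / 4) <= (`|x + y| * `|y + z|) * `|z + x|.
    apply: ler_pM; lra.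
  nra.
- have h1 : `|y| - `|z| <= `|y + z| by apply: lerB_normD.
  have h2 := tri3 (x + y) (- (z + x)) z.
  have e : x + y + - (z + x) + z = y by ring.
  rewrite e normrN in h2.
  have hpq := pq_half _ _ p1 r1.
  have : (3 * M / 8) * (3 * M / 4) <= (`|x + y| * `|z + x|) * `|y + z|.
    apply: ler_pM; lra.
  nra.
Qed.


Lemma core4 (N a b r t X M m3 m4 T c : R) :
  1 <= N -> 0 < c -> c <= 1/100 -> c * N <= 1/100 -> c * N ^+ 2 <= 1/100 ->
  c * N ^+ 3 <= 1/100 ->
  M = `|a| -> `|b| <= M -> m3 = `|r| -> m3 <= `|b| -> 1 <= m4 -> m4 <= m3 ->
  `|t| <= T -> T <= N * m4 -> `|X| <= T * m3 ^+ 2 ->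
  (b + r + t != 0 -> 1 <= `|b + r + t|) -> (a + b != 0 -> 1 <= `|a + b|) ->
  [\/ b + r + t = 0, c * `|a + b + r + t| <= m3, c * M ^+ 2 <= m3 ^+ 2 * m4 |
      c * M ^+ 2 <= `|(a + b + r + t) ^+ 3 - a ^+ 3 - b ^+ 3 - r ^+ 3 - X|].
Proof.
move=> N1 c0 c1 cN1 cN2 cN3 hM hb hm3 hm3b m41 m43 ht hT hX int1 int2.
have [e0|ne0] := eqVneq (b + r + t) 0; first by constructor 1.
have q1 := int1 ne0.
have [hC|hC] := leP (c * `|a + b + r + t|) m3; first by constructor 2.
have [hD|hD] := leP (c * M ^+ 2) (m3 ^+ 2 * m4); first by constructor 3.
constructor 4.
set s := r + t.
set W := m3 ^+ 2 * m4.
have T0 : 0 <= T by apply: le_trans ht.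
have m30 : 0 <= m3 by lra.
have hs : `|s| <= 2 * N * m3.
  have := ler_normD r t; rewrite -hm3 => h.
  have : N * m4 <= N * m3 by apply: ler_wpM2l; lra.
  nra.
have hm32 : m3 ^+ 2 <= W by rewrite /W; nra.
have M0 : 0 <= M by rewrite hM.
have h8 : 8 * N * m3 < M.
  rewrite ltNge; apply/negP => hle.
  have : M * M <= (8 * N * m3) * (8 * N * m3) by apply: ler_pM.
  have : c * N ^+ 2 * M ^+ 2 <= M ^+ 2 / 100 by nra.
  nra.
have k_eq : a + b + r + t = (a + b) + s by rewrite /s; ring.
have p1 : 1 <= `|a + b|.
  apply: int2; apply/negP => /eqP ab0.
  have ks : a + b + r + t = s by rewrite k_eq ab0 add0r.
  rewrite ks in hC.
  have : c * N * `|s| <= `|s| / 100 by nra.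
  nra.
have hr1 : `|a| - `|s| <= `|a + s| by apply: lerB_normD.
have h2 := tri3 (a + b) (- (b + s)) s.
have e : a + b + - (b + s) + s = a by ring.
rewrite e normrN in h2.
have q1' : 1 <= `|b + s| by rewrite /s addrA.
have hpq := pq_half _ _ p1 q1'.
have hsM : `|s| <= M / 4 by lra.
have hM' : M = `|a| by [].
have hpq' : 3 * M / 8 <= `|a + b| * `|b + s| by rewrite -hM' in h2; lra.
have hr' : 3 * M / 4 <= `|a + s| by rewrite -hM' in hr1; lra.
have main : (3 * M / 8) * (3 * M / 4) <= (`|a + b| * `|b + s|) * `|a + s|.
  apply: ler_pM; try lra.
have hEtot : `|3 * r ^+ 2 * t + 3 * r * t ^+ 2 + t ^+ 3 - X| <= 8 * N ^+ 3 * W := @errbound _ _ _ _ _ _ _ N1 hm3 m41 m43 ht hT hX.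
have hDW : W < c * M ^+ 2 by exact: hD.
have W0 : 0 <= W by rewrite /W; apply: mulr_ge0; [apply: sqr_ge0 | lra].
have M20 : 0 <= M ^+ 2 by apply: sqr_ge0.
have hNW : N ^+ 3 * W <= M ^+ 2 / 100.
  have N30 : 0 <= N ^+ 3 by apply: exprn_ge0; lra.
  have : N ^+ 3 * W <= N ^+ 3 * (c * M ^+ 2).
    by apply: ler_wpM2l; [exact: N30 | exact: (ltW hDW)].
  have : (c * N ^+ 3) * M ^+ 2 <= (1/100) * M ^+ 2 by apply: ler_wpM2r.
  lra.
have cM : c * M ^+ 2 <= (1/100) * M ^+ 2 by apply: ler_wpM2r.
have Hid : (a + b + r + t) ^+ 3 - a ^+ 3 - b ^+ 3 - r ^+ 3 - X =
  3 * ((a + b) * (b + s) * (a + s)) + (3 * r ^+ 2 * t + 3 * r * t ^+ 2 + t ^+ 3 - X).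
  rewrite /s; ring.
rewrite Hid.
have := lerB_normD (3 * ((a + b) * (b + s) * (a + s)))
                   (3 * r ^+ 2 * t + 3 * r * t ^+ 2 + t ^+ 3 - X).
rewrite (normrM 3) !normrM (ger0_norm (_ : (0:R) <= 3)) //.
lra.
Qed.
End Core.

Section Small.
Variable R : realFieldType.

Lemma core2 (a b M c : R) : 0 < c -> c <= 1/100 -> M = `|a| -> `|b| <= M ->
  1 <= `|b| -> 1 <= `|a + b| -> c * M ^+ 2 <= `|(a + b) ^+ 3 - a ^+ 3 - b ^+ 3|.
Proof.
move=> c0 c1 hM hb b1 ab1.
have -> : (a + b) ^+ 3 - a ^+ 3 - b ^+ 3 = 3 * (a * (b * (a + b))) by ring.
rewrite !normrM (ger0_norm (_ : (0:R) <= 3)) // -hM.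
have h2 := @tri3 _ (a + b) (- b) 0.
rewrite addr0 normr0 addr0 normrN (_ : a + b - b = a) ?addrK // -hM in h2.
have hpq := @pq_half _ _ _ b1 ab1.
have M0 : 0 <= M by rewrite hM.
have : M * (M / 2) <= M * (`|b| * `|a + b|) by apply: ler_wpM2l => //; lra.
have : c * M ^+ 2 <= (1/100) * M ^+ 2 by apply: ler_wpM2r => //; apply: sqr_ge0.
have : 0 <= M * M by apply: mulr_ge0.
rewrite expr2; lra.
Qed.

Lemma core3 (a b d M c : R) : 0 < c -> c <= 1/12 -> M = `|a| -> `|b| <= M ->
  `|d| <= `|b| -> 1 <= `|d| ->
  (a + b != 0 -> 1 <= `|a + b|) -> (b + d != 0 -> 1 <= `|b + d|) ->
  (d + a != 0 -> 1 <= `|d + a|) ->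
  a + b = 0 \/ b + d = 0 \/ d + a = 0 \/ (c * `|a + b + d| <= `|d|) \/
      c * M ^+ 2 <= `|(a + b + d) ^+ 3 - a ^+ 3 - b ^+ 3 - d ^+ 3|.
Proof.
move=> c0 c1 hM hb hd d1 i1 i2 i3.
have [e|n1] := eqVneq (a + b) 0; first by left.
have [e|n2] := eqVneq (b + d) 0; first by right; left.
have [e|n3] := eqVneq (d + a) 0; first by do 2 right; left.
have [h|h] := leP (c * `|a + b + d|) `|d|; first by do 3 right; left.
do 4 right.
have := @base3 _ _ _ _ _ _ c0 c1 (_ : `|a| <= M) hb (_ : `|d| <= M) (or_introl hM) d1 (i1 n1) (i2 n2) (i3 n3) h.
have -> : (a + b + d) ^+ 3 - a ^+ 3 - b ^+ 3 - d ^+ 3 = 3 * ((a + b) * (b + d) * (d + a)) by ring.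
rewrite !normrM (ger0_norm (_ : (0:R) <= 3)) //.
move=> H; have H' := H (_ : `|a| <= M) (le_trans hd hb); rewrite hM in H'; have H'' := H' (lexx _).
have : 0 <= `|a + b| * `|b + d| * `|d + a| by rewrite !mulr_ge0.
lra.
Qed.
End Small.

Lemma pick_max n (F : 'I_n -> nat) (s : seq 'I_n) : (size s < n)%N ->
  exists i, i \notin s /\ forall j, j \notin s -> (F j <= F i)%N.
Proof.
move=> hs.
have [i0 hi0] : exists i0, i0 \notin s.
  case: (pickP [pred j | j \notin s]) => [i0 hi0|h]; first by exists i0.
  have sub : [set: 'I_n] \subset mem s.
    by apply/subsetP => j _; have := h j; rewrite /= => /negbFE.
  have := subset_leq_card sub; rewrite cardsT card_ord.
  move=> b; have a := card_size s; exfalso; have := leq_trans b a => c.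
  by have := leq_ltn_trans c hs; rewrite ltnn.
case: (arg_maxnP F (P := [pred j | j \notin s]) hi0) => i /= hi hmax.
by exists i; split.
Qed.

Lemma all_in n (s : seq 'I_n) : uniq s -> size s = n -> forall j, j \in s.
Proof.
move=> us hs j; apply/negPn/negP => hj.
have u2 : uniq (j :: s) by rewrite /= hj.
have := max_card (mem (j :: s)); rewrite (card_uniqP u2) card_ord /= hs.
by rewrite ltnn.
Qed.

Lemma sum3 n (F : 'I_n -> int) i1 i2 i3 : i2 != i1 -> i3 != i1 -> i3 != i2 ->
  \sum_j F j = F i1 + (F i2 + (F i3 +
     \sum_(j | (j != i1) && (j != i2) && (j != i3)) F j)).
Proof.
move=> h21 h31 h32; rewrite (bigD1 i1) //= (bigD1 i2) //= (bigD1 i3) //=.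
by rewrite h31.
Qed.

Lemma sum2 n (F : 'I_n -> int) i1 i2 : i2 != i1 ->
  \sum_j F j = F i1 + (F i2 + \sum_(j | (j != i1) && (j != i2)) F j).
Proof. by move=> h21; rewrite (bigD1 i1) //= (bigD1 i2) //=. Qed.

Lemma kmaxj_ge n (k : 'I_n -> int) m v (s : seq 'I_n) : uniq s -> size s = m ->
  (0 < m)%N -> (forall j, j \in s -> v <= absz (k j))%N -> (v <= kmaxj k m)%N.
Proof.
move=> us hsz m0 hv; case: m hsz m0 => [//|m] hsz _; rewrite /kmaxj /=.
set L := sort geq _.
have srt : sorted geq L.
  by apply: sort_sorted => x y; exact: leq_total.
have cnt : (m.+1 <= count (fun x => v <= x)%N L)%N.
  rewrite /L count_sort count_map -size_filter -hsz.
  apply: uniq_leq_size => // j js.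
  by rewrite mem_filter /= hv // mem_enum.
rewrite leqNgt; apply/negP => hlt.
have : (count (fun x => v <= x)%N L <= m)%N.
  rewrite -(cat_take_drop m L) count_cat.
  have -> : count (fun x => v <= x)%N (drop m L) = 0%N.
    apply/eqP; rewrite -leqn0 leqNgt -has_count; apply/hasPn => x /(nthP 0%N) [i lti <-].
    rewrite nth_drop -ltnNge; apply: leq_ltn_trans hlt.
    rewrite size_drop in lti.
    have := @sorted_leq_nth _ geq (fun a b c h1 h2 => leq_trans h2 h1) (fun a => leqnn a) 0%N L srt m (m + i)%N.
    rewrite !inE => H; apply: H; last exact: leq_addr.
      by rewrite -subn_gt0; exact: leq_ltn_trans (leq0n i) lti.
    by rewrite -ltn_subRL.
  rewrite addn0; apply: leq_trans (count_size _ _) _.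
  by rewrite size_take; case: ifP => // h; rewrite leqNgt h.
move=> hc; by have := leq_trans cnt hc; rewrite ltnn.
Qed.


Lemma uniq2 (T : eqType) (i1 i2 : T) : i2 != i1 -> uniq [:: i1; i2].
Proof. by rewrite /= inE andbT eq_sym. Qed.
Lemma uniq3 (T : eqType) (i1 i2 i3 : T) : i2 != i1 -> i3 != i1 -> i3 != i2 -> uniq [:: i1; i2; i3].
Proof. by move=> h21 h31 h32; rewrite /= !inE !negb_or eq_sym h21 eq_sym h31 eq_sym h32. Qed.
Lemma uniq4 (T : eqType) (i1 i2 i3 i4 : T) : i2 != i1 -> i3 != i1 -> i3 != i2 -> i4 != i1 -> i4 != i2 -> i4 != i3 -> uniq [:: i1; i2; i3; i4].
Proof. by move=> h21 h31 h32 h41 h42 h43; rewrite /= !inE !negb_or eq_sym h21 eq_sym h31 eq_sym h41 eq_sym h32 eq_sym h42 eq_sym h43. Qed.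

Section Casts.
Variable R : realFieldType.
Lemma int_ge1 (z : int) : (z%:~R : R) != 0 -> 1 <= `|(z%:~R : R)|.
Proof.
rewrite intr_eq0 => nz; rewrite -intr_norm ler1z.
have : (0 < `|z|) by rewrite normr_gt0. lia.
Qed.
Lemma nabs (z w : int) : (absz z <= absz w)%N -> `|(z%:~R : R)| <= `|(w%:~R : R)|.
Proof. by rewrite -!intr_norm -!natr_absz ler_nat. Qed.
Lemma absR (z : int) : ((absz z)%:R : R) = `|(z%:~R : R)|.
Proof. by rewrite natr_absz intr_norm. Qed.
End Casts.

Theorem proposition2 (R : realType) (n : nat) (hn : (2 <= n)%N) :
  exists c : R, 0 < c /\
  forall k : 'I_n -> int,
    (forall j, k j != 0) -> ksum k != 0 ->
    (n = 2%N -> (absz (Hn k))%:R >= c * (kmax k)%:R ^+ 2) /\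
    (n = 3%N ->
       (absz (Hn k))%:R >= c * (kmax k)%:R ^+ 2 \/
       (exists j0 : 'I_n, k j0 = ksum k) \/
       (forall j : 'I_n, (absz (k j))%:R >= c * (absz (ksum k))%:R)) /\
    ((4 <= n)%N ->
       (absz (Hn k))%:R >= c * (kmax k)%:R ^+ 2 \/
       (exists j0 : 'I_n, k j0 = ksum k) \/
       (kmaxj k 3)%:R >= c * (absz (ksum k))%:R \/
       ((kmaxj k 3) ^ 2 * kmaxj k 4)%N%:R >= c * (kmax k)%:R ^+ 2).
Proof.
set N : R := n%:R.
have N1 : 1 <= N by rewrite /N ler1n; lia.
have N0 : 0 < N by lra.
have N30 : 0 < N ^+ 3 by apply: exprn_gt0.
exists (1 / (100 * N ^+ 3)).
set c := 1 / (100 * N ^+ 3).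
have c0 : 0 < c by rewrite /c divr_gt0 // mulr_gt0.
have cN3 : c * N ^+ 3 = 1 / 100 by rewrite /c; field; rewrite gt_eqF.
have NN1 : N <= N ^+ 2 by rewrite expr2; nra.
have NN2 : N ^+ 2 <= N ^+ 3.
  have : N ^+ 2 * 1 <= N ^+ 2 * N by apply: ler_wpM2l; [apply: sqr_ge0 | lra].
  by rewrite mulr1 -exprSr.
have cN2 : c * N ^+ 2 <= 1/100 by rewrite -cN3; apply: ler_wpM2l => //; lra.
have cN1 : c * N <= 1/100.
  have : c * N <= c * N ^+ 2 by apply: ler_wpM2l => //; lra.
  lra.
have cc1 : c <= 1/100.
  have : c * 1 <= c * N by apply: ler_wpM2l => //; lra.
  lra.
split => // k nz knz.
have fnz : forall j, 1 <= `|((k j)%:~R : R)| by move=> j; apply: int_ge1; rewrite intr_eq0.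
have [i1 [_ hi1]] := @pick_max n (fun j => absz (k j)) [::] (ltnW hn).
have hmax : forall j, (absz (k j) <= absz (k i1))%N by move=> j; apply: hi1.
have kmE : kmax k = absz (k i1).
  apply/eqP; rewrite eqn_leq; apply/andP; split.
    by apply/bigmax_leqP => j _; exact: hmax.
  rewrite /kmax; exact: leq_bigmax.
have [i2 [ni2 hi2]] := @pick_max n (fun j => absz (k j)) [:: i1] hn.
have n21 : i2 != i1 by move: ni2; rewrite inE.
have h12 : (absz (k i2) <= absz (k i1))%N := hmax i2.
split; [|split].
- move=> n2.
  have allin : forall j, j \in [:: i1; i2].
    by apply: all_in; [exact: uniq2 n21 | rewrite /= n2].
  have rest0 : forall F : 'I_n -> int, \sum_(j | (j != i1) && (j != i2)) F j = 0.
    move=> F; apply: big_pred0 => j; have := allin j; rewrite !inE.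
    by case/orP => /eqP ->; rewrite eqxx ?andbF.
  have kE : ksum k = k i1 + k i2 by rewrite /ksum (@sum2 _ _ _ _ n21) rest0 addr0.
  have HE : Hn k = (k i1 + k i2) ^+ 3 - (k i1 ^+ 3 + k i2 ^+ 3).
    by rewrite /Hn kE (@sum2 _ _ _ _ n21) rest0 addr0.
  rewrite HE kmE !absR !(rmorphB, rmorphD, rmorphXn) /= opprD addrA.
  apply: core2 => //; [exact: nabs | ].
  rewrite -rmorphD; apply: int_ge1; rewrite intr_eq0 -kE //.
- move=> n3.
  have sz3 : (size [:: i1; i2] < n)%N by rewrite /= n3.
  have [i3 [ni3 hi3]] := @pick_max n (fun j => absz (k j)) [:: i1; i2] sz3.
  have n31 : i3 != i1 by move: ni3; rewrite !inE negb_or => /andP [].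
  have n32 : i3 != i2 by move: ni3; rewrite !inE negb_or => /andP [].
  have h23 : (absz (k i3) <= absz (k i2))%N by apply: hi2; rewrite inE.
  have allin : forall j, j \in [:: i1; i2; i3].
    by apply: all_in; [exact: uniq3 n21 n31 n32 | rewrite /= n3].
  have rest0 : forall F : 'I_n -> int, \sum_(j | (j != i1) && (j != i2) && (j != i3)) F j = 0.
    move=> F; apply: big_pred0 => j; have := allin j; rewrite !inE.
    by case/or3P => /eqP ->; rewrite eqxx ?andbF.
  have kE : ksum k = k i1 + (k i2 + k i3) by rewrite /ksum (@sum3 _ _ _ _ _ n21 n31 n32) rest0 addr0.
  have HE : Hn k = (k i1 + (k i2 + k i3)) ^+ 3 - (k i1 ^+ 3 + (k i2 ^+ 3 + k i3 ^+ 3)).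
    by rewrite /Hn kE (@sum3 _ _ _ _ _ n21 n31 n32) rest0 addr0.
  have cc12 : c <= 1/12 by lra.
  have := @core3 R ((k i1)%:~R) ((k i2)%:~R) ((k i3)%:~R) `|(k i1)%:~R| c c0 cc12 erefl
     (@nabs R _ _ h12) (@nabs R _ _ h23) (fnz i3).
  have G : forall x y : int, ((x%:~R : R) + y%:~R != 0 -> 1 <= `|(x%:~R : R) + y%:~R|).
    by move=> x y h; rewrite -rmorphD; apply: int_ge1; rewrite rmorphD.
  move=> /(_ (G _ _) (G _ _) (G _ _)).
  have E0 : forall x y : int, (x%:~R : R) + y%:~R = 0 -> x + y = 0.
    by move=> x y; rewrite -rmorphD => /eqP; rewrite intr_eq0 => /eqP.
  case=> [/E0 e|[/E0 e|[/E0 e|[h|h]]]].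
  + by right; left; exists i3; rewrite kE addrA e add0r.
  + by right; left; exists i1; rewrite kE e addr0.
  + by right; left; exists i2; rewrite kE addrCA [k i1 + k i3]addrC e addr0.
  + right; right => j; rewrite !absR kE !rmorphD addrA.
    apply: (le_trans h).
    have := allin j; rewrite !inE => /or3P [] /eqP ->.
    * exact: (le_trans (@nabs R _ _ h23) (@nabs R _ _ h12)).
    * exact: (@nabs R _ _ h23).
    * exact: lexx.
  + left; rewrite HE kmE !absR !(rmorphB, rmorphD, rmorphXn) /=.
    move: h; congr (_ <= `|_|); ring.
- move=> n4.
  have sz3 : (size [:: i1; i2] < n)%N by apply: leq_trans n4.
  have [i3 [ni3 hi3]] := @pick_max n (fun j => absz (k j)) [:: i1; i2] sz3.
  have n31 : i3 != i1 by move: ni3; rewrite !inE negb_or => /andP [].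
  have n32 : i3 != i2 by move: ni3; rewrite !inE negb_or => /andP [].
  have h23 : (absz (k i3) <= absz (k i2))%N by apply: hi2; rewrite inE.
  have sz4 : (size [:: i1; i2; i3] < n)%N by [].
  have [i4 [ni4 hi4]] := @pick_max n (fun j => absz (k j)) [:: i1; i2; i3] sz4.
  have n41 : i4 != i1 by move: ni4; rewrite !inE !negb_or => /and3P [].
  have n42 : i4 != i2 by move: ni4; rewrite !inE !negb_or => /and3P [].
  have n43 : i4 != i3 by move: ni4; rewrite !inE !negb_or => /and3P [].
  have h34 : (absz (k i4) <= absz (k i3))%N by apply: hi3; rewrite !inE negb_or n41 n42.
  set P3 := fun j => (j != i1) && (j != i2) && (j != i3).
  have kE : ksum k = k i1 + (k i2 + (k i3 + \sum_(j | P3 j) k j)).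
    by rewrite /ksum (@sum3 _ _ _ _ _ n21 n31 n32).
  have HE : Hn k = ksum k ^+ 3 - (k i1 ^+ 3 + (k i2 ^+ 3 + (k i3 ^+ 3 + \sum_(j | P3 j) k j ^+ 3))).
    by rewrite /Hn (@sum3 _ _ _ _ _ n21 n31 n32).
  set f := fun j => ((k j)%:~R : R).
  set a := f i1. set b := f i2. set r := f i3.
  set t := (\sum_(j | P3 j) k j)%:~R : R.
  set X := (\sum_(j | P3 j) k j ^+ 3)%:~R : R.
  set T := \sum_(j | P3 j) `|f j|.
  set m3 := `|r|. set m4 := `|f i4|.
  have hP3 : forall j, P3 j -> `|f j| <= m4.
    move=> j Pj; apply: nabs; apply: hi4.
    by move: Pj; rewrite /P3 !inE !negb_or => /andP [/andP [-> ->] ->].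
  have m43 : m4 <= m3 by apply: nabs.
  have ht : `|t| <= T by rewrite /t rmorph_sum; apply: ler_norm_sum.
  have hT : T <= N * m4.
    apply: (le_trans (_ : _ <= \sum_(j | P3 j) m4)); first by apply: ler_sum.
    rewrite [X in _ <= X](_ : _ = \sum_(j < n) m4); last first.
      by rewrite sumr_const card_ord mulr_natl.
    rewrite [X in _ <= X](bigID P3) /= lerDl; apply: sumr_ge0 => j _.
    exact: normr_ge0.
  have hX : `|X| <= T * m3 ^+ 2.
    rewrite /X rmorph_sum /T mulr_suml; apply: (le_trans (ler_norm_sum _ _ _)).
    apply: ler_sum => j Pj; rewrite rmorphXn normrX exprS.
    apply: ler_wpM2l => //; rewrite !expr2.
    have := le_trans (hP3 j Pj) m43 => hj.
    by apply: ler_pM.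
  have G : forall x : int, (x%:~R : R) != 0 -> 1 <= `|(x%:~R : R)| by move=> x; apply: int_ge1.
  have int1 : b + r + t != 0 -> 1 <= `|b + r + t|.
    by rewrite /b /r /t /f -!rmorphD; apply: G.
  have int2 : a + b != 0 -> 1 <= `|a + b|.
    by rewrite /a /b /f -!rmorphD; apply: G.
  have cN3' : c * N ^+ 3 <= 1/100 by rewrite cN3.
  have := @core4 R N a b r t X `|a| m3 m4 T c N1 c0 cc1 cN1 cN2 cN3' erefl
     (@nabs R _ _ h12) erefl (@nabs R _ _ h23) (fnz i4) m43 ht hT hX int1 int2.
  have kR : (ksum k)%:~R = a + b + r + t by rewrite kE !rmorphD !addrA.
  case=> [e|h|h|h].
  + right; left; exists i1; rewrite kE.
    move: e; rewrite /b /r /t /f -!rmorphD => /eqP; rewrite intr_eq0 => /eqP e.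
    by rewrite (addrA (k i2)) e addr0.
  + right; right; left; rewrite absR kR; apply: (le_trans h).
    rewrite /m3 /r /f -absR ler_nat.
    apply: (@kmaxj_ge n k 3 _ [:: i1; i2; i3]) => //; first exact: uniq3 n21 n31 n32.
    move=> j; rewrite !inE => /or3P [] /eqP ->; [exact: leq_trans h23 h12 | exact: h23 | exact: leqnn].
  + right; right; right; rewrite kmE absR natrM natrX.
    apply: (le_trans h); rewrite -/a.
    have k3 : m3 <= (kmaxj k 3)%:R.
      rewrite /m3 /r /f -absR ler_nat.
      apply: (@kmaxj_ge n k 3 _ [:: i1; i2; i3]) => //; first exact: uniq3 n21 n31 n32.
      move=> j; rewrite !inE => /or3P [] /eqP ->; [exact: leq_trans h23 h12 | exact: h23 | exact: leqnn].
    have k4 : m4 <= (kmaxj k 4)%:R.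
      rewrite /m4 /f -absR ler_nat.
      apply: (@kmaxj_ge n k 4 _ [:: i1; i2; i3; i4]) => //; first exact: uniq4 n21 n31 n32 n41 n42 n43.
      move=> j; rewrite !inE => /or4P [] /eqP ->.
      * exact: leq_trans h34 (leq_trans h23 h12).
      * exact: leq_trans h34 h23.
      * exact: h34.
      * exact: leqnn.
    apply: ler_pM; [exact: sqr_ge0 | exact: normr_ge0 | | exact: k4].
    by rewrite !expr2; apply: ler_pM; [exact: normr_ge0 | exact: normr_ge0 | exact: k3 | exact: k3].
  + left; rewrite HE kmE !absR kE !(rmorphB, rmorphD, rmorphXn) /=.
    move: h; rewrite -/a; congr (_ <= `|_|).
    rewrite /t /X !rmorph_sum /=. rewrite /a /b /r /f. ring.
Qed.
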